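(* There exist a CSS code $\mathcal C$ on $n$ qupits and a partition $\{1,\dots,n\}=A\sqcup B$ for which $ST_B(\mathcal C)\subsetneq \mathcal C_B$.
   Context: A qupit is $\mathbb{C}^p$, $p$ prime, with basis $\{|a\rangle:a\in\mathbb{Z}_p\}$, and $\mathcal F|a\rangle=\frac1{\sqrt p}\sum_be^{2\pi iab/p}|b\rangle$. For $U\le\mathbb{Z}_p^n$, $U^{(q)}=\mathrm{span}\{|\mathbf u\rangle:\mathbf u\in U\}$. A CSS code is $\mathcal C=V^{(q)}\cap\mathcal F^{\otimes n}W^{(q)}$ for linear codes $V,W\le\mathbb{Z}_p^n$ with $V^\perp\subseteq W$. For $B\subseteq\{1,\dots,n\}$, $V_B=\{\mathbf v:\exists\mathbf w\in V,\ \mathrm{supp}(\mathbf v-\mathbf w)\subseteq B\}$, $W_B$ is defined similarly, and $\mathcal C_B=V_B^{(q)}\cap\mathcal F^{\otimes n}W_B^{(q)}$. A mixed state $\rho'$ is ''in'' $\mathcal C$ if $\mathrm{Tr}(P_{\mathcal C}\rho')=1$. $ST_B(\mathcal C)=\{\rho:\exists\rho'\text{ in }\mathcal C,\ \mathrm{Tr}_B(\rho)=\mathrm{Tr}_B(\rho')\}$, where $\mathcal H=\mathcal H_A\otimes\mathcal H_B$ with $\mathcal H_A,\mathcal H_B$ the qupits in positions $A$ and $B$. *)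

(* Defs.v *)
(* Complex numbers are R[i] (mathcomp-real-closed) for a
   realType R (mathcomp-reals); Stdlib's R is such an R, so R[i] is C. *)
From HB Require Import structures.
From mathcomp Require Import all_boot all_order all_algebra all_field.
From mathcomp Require Import reals complex.
Set Implicit Arguments. Unset Strict Implicit. Unset Printing Implicit Defensive.
Import Order.TTheory GRing.Theory Num.Theory.
Local Open Scope ring_scope.

Section QuditDefs.
Variable (C : numClosedFieldType) (p n : nat).

(* Z_p^n : row vectors over 'F_p; basis index of the n-qupit space. *)
Definition vecT := 'rV['F_p]_n.

(* Vectors (kets) of (C^p)^{⊗ n} and operators on it, written in the
   computational basis {|u> : u in Z_p^n}. *)
Definition ket := vecT -> C.
Definition oper := vecT -> vecT -> C.

Definition dotp (a b : vecT) : 'F_p := \sum_(i < n) a 0 i * b 0 i.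

(* omega = e^{2 pi i / p}:  p.-root (-1) = e^{i pi / p} (minimal argument) *)
Definition omega : C := (p.-root (-1)) ^+ 2.

Definition Fn (phi : ket) : ket :=
  fun b => (sqrtC (p%:R) ^+ n)^-1 *
           \sum_(a : vecT) omega ^+ (nat_of_ord (dotp a b)) * phi a.

(* U^{(q)} = span {|u> : u in U} *)
Definition qspan (U : pred vecT) (psi : ket) : Prop :=
  forall u, ~~ U u -> psi u = 0.

Definition css_space (V W : pred vecT) (psi : ket) : Prop :=
  qspan V psi /\ exists phi, qspan W phi /\ psi = Fn phi.

Definition dual (V : {vspace vecT}) : pred vecT :=
  fun u => [forall v : vecT, (v \in V) ==> (dotp u v == 0)].

Definition supp (v : vecT) : {set 'I_n} := [set i | v 0 i != 0].

Definition extB (B : {set 'I_n}) (V : {vspace vecT}) : pred vecT :=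
  fun v => [exists w : vecT, (w \in V) && (supp (v - w) \subset B)].

Definition opmul (X Y : oper) : oper := fun u v => \sum_w X u w * Y w v.
Definition optr (X : oper) : C := \sum_u X u u.
Definition opapp (X : oper) (psi : ket) : ket := fun u => \sum_v X u v * psi v.

Definition density (rho : oper) : Prop :=
  (forall u v, rho v u = (rho u v)^*) /\
  (forall x : ket, 0 <= \sum_u \sum_v (x u)^* * rho u v * x v) /\
  optr rho = 1.

Definition orth_proj_onto (S : ket -> Prop) (P : oper) : Prop :=
  (forall u v, P v u = (P u v)^*) /\ opmul P P = P /\
  (forall psi, S psi <-> exists phi, opapp P phi = psi).

Definition state_in (S : ket -> Prop) (rho : oper) : Prop :=
  density rho /\ exists P, orth_proj_onto S P /\ optr (opmul P rho) = 1.

(* H = H_A ⊗ H_B, A = complement of B; H_A indexed by vectors supported in A *)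
Definition projA (B : {set 'I_n}) (x : vecT) : vecT :=
  \row_i (if i \in B then 0 else x 0 i).

Definition ptrB (B : {set 'I_n}) (rho : oper) : oper :=
  fun x y => \sum_(z : vecT | supp z \subset B) rho (projA B x + z) (projA B y + z).

Definition ST (B : {set 'I_n}) (S : ket -> Prop) (rho : oper) : Prop :=
  density rho /\ exists rho', state_in S rho' /\ ptrB B rho = ptrB B rho'.

End QuditDefs.

(* Main.v *)
Require Import Defs.
From HB Require Import structures.
From mathcomp Require Import all_boot all_order all_algebra all_field.
From mathcomp Require Import reals complex.
From mathcomp Require Import ring.
From Stdlib Require Import FunctionalExtensionality.
Import Order.TTheory GRing.Theory Num.Theory.
Local Open Scope ring_scope.

Lemma F2cases (x : 'F_2) : x = 0 \/ x = 1.
Proof. by case: x => [[|[|k]] Hk] //=; [left|right]; apply/eqP. Qed.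

Lemma F2_11 : (1 : 'F_2) + 1 = 0. Proof. by apply/eqP. Qed.
Lemma F2_10 : (1 : 'F_2) != 0. Proof. by []. Qed.

Lemma sumF2 (V : nmodType) (f : 'F_2 -> V) : \sum_(x : 'F_2) f x = f 0 + f 1.
Proof. rewrite big_ord_recr big_ord_recr big_ord0 /= add0r. by congr (f _ + f _); apply/eqP. Qed.

Definition r (x y : 'F_2) : vecT 2 2 := \row_(i < 2) if i == ord0 then x else y.

Lemma r0 a b : (r a b) 0 ord0 = a. Proof. by rewrite mxE. Qed.
Lemma r1 a b : (r a b) 0 ord_max = b. Proof. by rewrite mxE. Qed.

Lemma rE (v : vecT 2 2) : v = r (v 0 ord0) (v 0 ord_max).
Proof.
apply/rowP => i; rewrite mxE; case: i => [[|[|k]] Hk] //=.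
- by congr (v 0 _); apply/val_inj.
- by congr (v 0 _); apply/val_inj.
Qed.

Lemma r_inj a b c d : r a b = r c d -> a = c /\ b = d.
Proof. by move=> h; split; [rewrite -(r0 a b) h r0 | rewrite -(r1 a b) h r1]. Qed.

Lemma r_eq a b c d : (r a b == r c d) = (a == c) && (b == d).
Proof.
apply/eqP/andP => [/r_inj [-> ->] //| [/eqP -> /eqP ->] //].
Qed.

Lemma rD a b c d : r a b + r c d = r (a + c) (b + d).
Proof. apply/rowP => i; rewrite !mxE; by case: ifP. Qed.
Lemma rN a b : - r a b = r (- a) (- b).
Proof. apply/rowP => i; rewrite !mxE; by case: ifP. Qed.

Lemma sumV (V : nmodType) (f : vecT 2 2 -> V) :
  \sum_(v : vecT 2 2) f v = f (r 0 0) + f (r 0 1) + f (r 1 0) + f (r 1 1).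
Proof.
rewrite (reindex (fun xy : 'F_2 * 'F_2 => r xy.1 xy.2)) /=; last first.
  apply: onW_bij; exists (fun v : vecT 2 2 => (v 0 ord0, v 0 ord_max)).
  - by case=> a b /=; rewrite r0 r1.
  - by move=> v /=; rewrite -rE.
rewrite -(pair_big xpredT xpredT (fun a b => f (r a b))) /=.
by rewrite sumF2 !sumF2 addrA.
Qed.

Lemma dotpE a b c d : dotp (r a b) (r c d) = a * c + b * d.
Proof. by rewrite /dotp big_ord_recr big_ord_recr big_ord0 /= !mxE /= add0r. Qed.

Lemma om2 (C : numClosedFieldType) : omega C 2 = -1.
Proof. by rewrite /omega rootCK. Qed.

Lemma rZ k a b : k *: r a b = r (k * a) (k * b).
Proof. apply/rowP => i; rewrite !mxE; by case: ifP. Qed.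

Definition V0 : {vspace vecT 2 2} := <[r 1%R 1%R]>%VS.

Lemma inV a b : (r a b \in V0) = (a == b).
Proof.
apply/vlineP/eqP => [[k]|->].
  by rewrite rZ !mulr1 => /r_inj [-> ->].
by exists b; rewrite rZ !mulr1.
Qed.

Lemma I2cases (i : 'I_2) : i = ord0 \/ i = ord_max.
Proof. by case: i => [[|[|k]] Hk] //=; [left|right]; apply/val_inj. Qed.

Definition B0 : {set 'I_2} := [set ord_max].

Lemma suppB a b : supp (r a b) \subset B0 = (a == 0).
Proof.
apply/subsetP/eqP => [h | -> i].
  apply/eqP; apply/negPn/negP => ha.
  by have := h ord0; rewrite /supp inE r0 => /(_ ha); rewrite inE.
rewrite /supp !inE; case: (I2cases i) => ->; by rewrite ?r0 ?r1 ?eqxx.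
Qed.

Lemma projAE a b : projA B0 (r a b) = r a 0.
Proof.
apply/rowP => i; rewrite !mxE !inE; case: (I2cases i) => -> //=.
Qed.

Lemma extB_all v : extB B0 V0 v.
Proof.
apply/existsP; exists (r (v 0 ord0) (v 0 ord0)); rewrite inV eqxx /=.
by rewrite {1}(rE v) rN rD subrr suppB.
Qed.

Section Four.
Variable C : numClosedFieldType.

Lemma FnE (phi : ket C 2 2) c d : Fn phi (r c d) = 2^-1 * (phi (r 0 0) +
  (-1)^+(nat_of_ord d) * phi (r 0 1) + (-1)^+(nat_of_ord c) * phi (r 1 0) +
  (-1)^+ (nat_of_ord (c + d)) * phi (r 1 1)).
Proof.
by rewrite /Fn sumV !dotpE om2 sqrtCK !(mul0r, mul1r, add0r, addr0).
Qed.

Lemma FnFn (phi : ket C 2 2) : Fn (Fn phi) = phi.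
Proof.
apply: functional_extensionality => b; rewrite (rE b).
move: (b 0 ord0) (b 0 ord_max) => c d.
have h2 : (2 : C) != 0 by rewrite pnatr_eq0.
case: (F2cases c) => ->; case: (F2cases d) => ->;
rewrite !FnE ?F2_11 ?(addr0, add0r) /= ?expr0 ?expr1; by field.
Qed.
End Four.

Section Main.
Variable C : numClosedFieldType.

Lemma e10 : ((1 : 'F_2) == 0) = false. Proof. by []. Qed.
Lemma e01 : ((0 : 'F_2) == 1) = false. Proof. by []. Qed.

Lemma colP (P : oper C 2 2) :
  (forall psi, css_space (mem V0) (mem V0) psi <-> exists phi, opapp P phi = psi) ->
  forall v, [/\ P (r 0 1) v = 0, P (r 1 0) v = 0 & P (r 0 0) v = P (r 1 1) v].
Proof.
move=> hP v.
have : css_space (mem V0) (mem V0) (fun u => P u v).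
  apply/hP; exists (fun w => if w == v then 1 else 0).
  apply: functional_extensionality => u; rewrite /opapp (bigD1 v) //= eqxx mulr1.
  by rewrite big1 ?addr0 // => w /negbTE ->; rewrite mulr0.
move=> [hq [phi [hw E]]].
have E' u : P u v = Fn phi u by rewrite (f_equal (fun f => f u) E).
split; first by apply: hq; rewrite /= inV.
  by apply: hq; rewrite /= inV.
rewrite !E' !FnE F2_11 /= !expr0 !expr1.
rewrite (hw (r 0 1)) ?(hw (r 1 0)) /= ?inV //.
by rewrite !mulr0 !addr0.
Qed.

Lemma ptrBE (rho : oper C 2 2) a b a' b' :
  ptrB B0 rho (r a b) (r a' b') = rho (r a 0) (r a' 0) + rho (r a 1) (r a' 1).
Proof.
rewrite /ptrB !projAE big_mkcond sumV !suppB eqxx e10 /= !rD.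
by rewrite !addr0 !add0r.
Qed.

Lemma psd_delta (rho : oper C 2 2) :
  (forall x : ket C 2 2, 0 <= \sum_u \sum_v (x u)^* * rho u v * x v) ->
  forall w, 0 <= rho w w.
Proof.
move=> psd w; have := psd (fun u => if u == w then 1 else 0).
rewrite (bigD1 w) //= [X in _ + X]big1; last first.
  move=> u /negbTE nu; rewrite nu rmorph0 big1 // => v _; by rewrite !mul0r.
rewrite addr0 (bigD1 w) //= big1; last first.
  by move=> v /negbTE nv; rewrite nv mulr0.
by rewrite addr0 eqxx rmorph1 mul1r mulr1.
Qed.

Definition rho0 : oper C 2 2 :=
  fun u v => if (u == r 0 0) && (v == r 0 0) then 1 else 0.

Lemma key (rho' P : oper C 2 2) : density rho' ->
  orth_proj_onto (css_space (mem V0) (mem V0)) P -> optr (opmul P rho') = 1 ->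
  ptrB B0 rho0 = ptrB B0 rho' -> False.
Proof.
move=> [_ [psd _]] [hh [hid hr]] htr hpt.
have col := colP P hr.
have P01 v : P (r 0 1) v = 0 by case: (col v).
have P10 v : P (r 1 0) v = 0 by case: (col v).
have P11 v : P (r 1 1) v = P (r 0 0) v by case: (col v).
have P0_01 : P (r 0 0) (r 0 1) = 0 by rewrite hh P01 rmorph0.
have P0_10 : P (r 0 0) (r 1 0) = 0 by rewrite hh P10 rmorph0.
have cR : (P (r 0 0) (r 0 0))^* = P (r 0 0) (r 0 0) by rewrite -hh.
have P0_11 : P (r 0 0) (r 1 1) = P (r 0 0) (r 0 0) by rewrite hh P11 cR.
have hidc := f_equal (fun f => f (r 0 0) (r 0 0)) hid.
rewrite /= /opmul sumV !P01 !P10 !P11 !P0_01 !P0_10 !P0_11 in hidc.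
rewrite /optr /opmul !sumV !P01 !P10 !P11 !P0_01 !P0_10 !P0_11 in htr.
have pt1 := f_equal (fun f => f (r 1 0) (r 1 0)) hpt.
have pt0 := f_equal (fun f => f (r 0 0) (r 0 0)) hpt.
rewrite /= !ptrBE /rho0 !r_eq !eqxx ?e10 ?e01 /= in pt1 pt0.
have d01 := @psd_delta rho' psd (r 0 1).
have d10 := @psd_delta rho' psd (r 1 0).
have := psd (fun u => if u == r 0 0 then 1 else if u == r 1 1 then -2 else 0).
rewrite !sumV !r_eq !eqxx ?e10 ?e01 /= !rmorph0 !rmorph1 !rmorphN !rmorph_nat.
set c := P (r 0 0) (r 0 0) in hidc htr.
set a00 := rho' (r 0 0) (r 0 0). set a01 := rho' (r 0 1) (r 0 1).
set a10 := rho' (r 1 0) (r 1 0). set a11 := rho' (r 1 1) (r 1 1).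
set b := rho' (r 0 0) (r 1 1). set b' := rho' (r 1 1) (r 0 0).
have hc : c * (1 - 2 * c) = - ((c * c + 0 * 0 + 0 * 0 + c * c) - c) by ring.
rewrite hidc subrr oppr0 in hc.
rewrite addr0 in pt0 pt1.
rewrite add0r in pt1.
have e00 : a00 = 1 - a01 by rewrite /a00 /a01 pt0; ring.
have e11 : a11 = - a10 by apply/eqP; rewrite -subr_eq0 opprK addrC /a10 /a11 -pt1.
move: hc; move/eqP; rewrite mulf_eq0 => /orP [/eqP c0 | /eqP h12].
  move: htr; rewrite c0 !mul0r !addr0 => /eqP; by rewrite eq_sym oner_eq0.
have hS : b' = 2 - a00 - b - a11.
  apply/eqP; rewrite -subr_eq0; apply/eqP.
  have -> : b' - (2 - a00 - b - a11) = (a00 + b' + b + a11) * (1 - 2 * c) +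
     2 * ((c * a00 + 0 * rho' (r 0 1) (r 0 0) +
    0 * rho' (r 1 0) (r 0 0) + c * b' +
    (0 * rho' (r 0 0) (r 0 1) + 0 * a01 +
     0 * rho' (r 1 0) (r 0 1) + 0 * rho' (r 1 1) (r 0 1)) +
    (0 * rho' (r 0 0) (r 1 0) + 0 * rho' (r 0 1) (r 1 0) +
     0 * a10 + 0 * rho' (r 1 1) (r 1 0)) +
    (c * b + 0 * rho' (r 0 1) (r 1 1) +
     0 * rho' (r 1 0) (r 1 1) + c * a11)) - 1) by ring.
  by rewrite htr h12 subrr mulr0 mulr0 addr0.
rewrite hS e00 e11 => hQ.
have hQ' : 0 <= - (1 + (3 * a01 + 6 * a10)).
  apply: (le_trans hQ); rewrite le_eqVlt; apply/orP; left; apply/eqP; ring.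
have hpos : (1 : C) <= 1 + (3 * a01 + 6 * a10).
  by rewrite lerDl addr_ge0 // mulr_ge0 // ler0n.
rewrite oppr_ge0 in hQ'.
by have := le_trans hpos hQ'; rewrite ler10.
Qed.
End Main.

Section Rest.
Variable C : numClosedFieldType.

Definition idop : oper C 2 2 := fun u v => if u == v then 1 else 0.

Lemma opapp_id (phi : ket C 2 2) : opapp idop phi = phi.
Proof.
apply: functional_extensionality => u; rewrite /opapp (bigD1 u) //= /idop eqxx mul1r.
by rewrite big1 ?addr0 // => v; rewrite eq_sym => /negbTE ->; rewrite mul0r.
Qed.

Lemma opmul_idl (X : oper C 2 2) : opmul idop X = X.
Proof.
apply: functional_extensionality => u; apply: functional_extensionality => w.
rewrite /opmul (bigD1 u) //= /idop eqxx mul1r.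
by rewrite big1 ?addr0 // => v; rewrite eq_sym => /negbTE ->; rewrite mul0r.
Qed.

Lemma CB_all (psi : ket C 2 2) : css_space (extB B0 V0) (extB B0 V0) psi.
Proof.
split; first by move=> u; rewrite extB_all.
exists (Fn psi); split; first by move=> u; rewrite extB_all.
by rewrite FnFn.
Qed.

Lemma proj_all : orth_proj_onto (css_space (extB B0 V0) (extB B0 V0)) idop.
Proof.
split.
  by move=> u v; rewrite /idop eq_sym; case: (u == v); rewrite ?rmorph1 ?rmorph0.
split; first exact: opmul_idl.
move=> psi; split => _; last exact: CB_all.
by exists psi; rewrite opapp_id.
Qed.

Lemma state_all (rho : oper C 2 2) : density rho ->
  state_in (css_space (extB B0 V0) (extB B0 V0)) rho.
Proof.
move=> d; split=> //; exists idop; split; first exact: proj_all.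
by rewrite opmul_idl; case: d => _ [_ ->].
Qed.

Lemma density_rho0 : density (rho0 C).
Proof.
split.
  by move=> u v; rewrite /rho0 andbC; case: (_ && _) => /=; rewrite ?rmorph1 ?rmorph0.
split.
  move=> x; rewrite (bigD1 (r 0 0)) //= [X in _ + X]big1; last first.
    move=> u /negbTE nu; rewrite big1 // => v _; by rewrite /rho0 nu /= mulr0 mul0r.
  rewrite addr0 (bigD1 (r 0 0)) //= big1; last first.
    by move=> v /negbTE nv; rewrite /rho0 nv eqxx /= mulr0 mul0r.
  by rewrite addr0 /rho0 eqxx /= mulr1 mulrC mul_conjC_ge0.
rewrite /optr (bigD1 (r 0 0)) //= big1; last first.
  by move=> v /negbTE nv; rewrite /rho0 nv.
by rewrite addr0 /rho0 eqxx.
Qed.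
End Rest.

Theorem mainTheorem10 (R : realType) :
  exists (p n : nat) (V W : {vspace vecT p n}) (B : {set 'I_n}),
    [/\ prime p,
        (forall u, dual V u -> u \in W),
        (forall rho, ST B (css_space (C:=R[i]) (mem V) (mem W)) rho ->
            state_in (css_space (extB B V) (extB B W)) rho) &
        (exists rho, state_in (css_space (C:=R[i]) (extB B V) (extB B W)) rho /\
            ~ ST B (css_space (mem V) (mem W)) rho)].
Proof.
exists 2%N, 2%N, V0, V0, B0; split.
- by [].
- move=> u; rewrite /dual (rE u); move: (u 0 ord0) (u 0 ord_max) => a b.
  move/forallP => /(_ (r 1 1)); rewrite inV eqxx dotpE !mulr1 /= inV.
  by case: (F2cases a) => ->; case: (F2cases b) => ->.
- by move=> rho [d _]; exact: state_all.
- exists (rho0 R[i]); split; first exact: state_all (density_rho0 _).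
  move=> [_ [rho' [[d' [P [hP htr]]] hpt]]].
  exact: (@key _ rho' P d' hP htr hpt).
Qed.
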